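(* Let $0<q<1$. The kernel $K(\mu,n)=(q^{\mu};q)_n$ is strictly totally positive of order $3$ on $(0,\infty)\times\mathbb{N}_0$, i.e. for $m=1,2,3$, all reals $0<\mu_1<\dots<\mu_m$ and all integers $0\le n_1<\dots<n_m$, $\det\big((q^{\mu_i};q)_{n_j}\big)_{i,j=1}^m>0$.
   Context: $(a;q)_n=\prod_{j=0}^{n-1}(1-aq^j)$, with $(a;q)_0=1$. *)

(* Defs.v *)
From mathcomp Require Import all_boot all_order all_algebra.
From mathcomp Require Import all_classical all_reals all_analysis.
Set Implicit Arguments. Unset Strict Implicit. Unset Printing Implicit Defensive.
Import Order.TTheory GRing.Theory Num.Theory.
Local Open Scope ring_scope.

Definition qpoch (R : comRingType) (a q : R) (n : nat) : R :=
  \prod_(j < n) (1 - a * q ^+ j).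

Definition qkernel (R : realType) (q mu : R) (n : nat) : R :=
  qpoch (powR q mu) q n.

(* Main.v *)
Require Import Defs.
From mathcomp Require Import all_boot all_order all_algebra.
From mathcomp Require Import all_classical all_reals all_analysis.
From mathcomp Require Import ring lra zify.
Import Order.TTheory GRing.Theory Num.Theory.
Local Open Scope ring_scope.

Section Alg.
Variable R : realFieldType.
Variable r : nat -> R.
Hypothesis r0 : forall j, 0 <= r j.

Definition Nr (a b : nat) (y : R) := \prod_(a <= j < b) (y + r j).

Lemma Nr_pos a b y : 0 < y -> 0 < Nr a b y.
Proof.
move=> y0; rewrite /Nr; apply: prodr_gt0 => j _.
by have := r0 j; lra.
Qed.

Lemma Nr_split a b c y : (a <= b)%N -> (b <= c)%N -> Nr a c y = Nr a b y * Nr b c y.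
Proof. by move=> ab bc; rewrite /Nr (big_cat_nat ab bc). Qed.

Lemma Nr_recl a b y : (a < b)%N -> Nr a b y = (y + r a) * Nr a.+1 b y.
Proof. by move=> ab; rewrite /Nr big_ltn. Qed.

Lemma Nr_nil a y : Nr a a y = 1.
Proof. by rewrite /Nr big_geq. Qed.

Lemma Nr_mono k a b s t : (b - a = k)%N -> 0 < s -> s <= t -> Nr a b s <= Nr a b t.
Proof.
elim: k a => [|k IH] a hk s0 st.
  rewrite /Nr !big_geq ?lexx //; lia.
have ab : (a < b)%N by rewrite -subn_gt0 hk.
rewrite !(Nr_recl _ _ _ ab).
have h1 := IH a.+1 ltac:(lia) s0 st.
have h2 := @Nr_pos a.+1 b s s0.
have := r0 a; nra.
Qed.

Lemma Nr_smono k a b s t : (b - a = k.+1)%N -> 0 < s -> s < t -> Nr a b s < Nr a b t.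
Proof.
elim: k a => [|k IH] a hk s0 st.
  have ab : (a < b)%N by rewrite -subn_gt0 hk.
  rewrite !(Nr_recl _ _ _ ab) (_ : a.+1 = b) ?Nr_nil; last by lia.
  lra.
have ab : (a < b)%N by rewrite -subn_gt0 hk.
rewrite !(Nr_recl _ _ _ ab).
have h1 := IH a.+1 ltac:(lia) s0 st.
have h2 := @Nr_pos a.+1 b s s0.
have := r0 a; nra.
Qed.

Lemma Nr_convex k a b y1 y2 y3 : (b - a = k)%N -> 0 < y1 -> y1 < y2 -> y2 < y3 ->
  (y3 - y1) * (Nr a b y2 - Nr a b y1) <= (y2 - y1) * (Nr a b y3 - Nr a b y1).
Proof.
elim: k a => [|k IH] a hk p1 p12 p23.
  rewrite /Nr !big_geq; [lra|lia..].
have ab : (a < b)%N by rewrite -subn_gt0 hk.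
rewrite !(Nr_recl _ _ _ ab).
have h1 := IH a.+1 ltac:(lia) p1 p12 p23.
set f1 := Nr a.+1 b y1 in h1 *; set f2 := Nr a.+1 b y2 in h1 *; set f3 := Nr a.+1 b y3 in h1 *.
have m12 : f1 <= f2 by apply: (@Nr_mono (b - a.+1)) => //; lra.
set l := r a.
have : (y2 - y1) * ((y3 + l) * f3 - (y1 + l) * f1) - (y3 - y1) * ((y2 + l) * f2 - (y1 + l) * f1)
  = (y3 + l) * ((y2 - y1) * (f3 - f1) - (y3 - y1) * (f2 - f1)) + (y3 - y1) * (f2 - f1) * (y3 - y2).
  by rewrite /l; ring.
have := r0 a; rewrite -/l => l0.
have A : 0 <= (y3 + l) * ((y2 - y1) * (f3 - f1) - (y3 - y1) * (f2 - f1)).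
  apply: mulr_ge0; lra.
have B : 0 <= (y3 - y1) * (f2 - f1) * (y3 - y2).
  apply: mulr_ge0; [apply: mulr_ge0|]; lra.
lra.
Qed.

Definition D3 (y1 y2 y3 B1 B2 B3 C1 C2 C3 : R) :=
  (B2 * C3 - C2 * B3) - (B1 * C3 - C1 * B3) + (B1 * C2 - C1 * B2).

Lemma step_id y1 y2 y3 l B1 B2 B3 C1 C2 C3 :
  D3 y1 y2 y3 ((y1 + l) * B1) ((y2 + l) * B2) ((y3 + l) * B3)
     ((y1 + l) * C1) ((y2 + l) * C2) ((y3 + l) * C3) =
  (y2 + l) * (y3 + l) * D3 y1 y2 y3 B1 B2 B3 C1 C2 C3
  + (y3 - y1) * (y3 - y2) * (B1 * C2 - C1 * B2)
  + (y3 + l) * ((y2 - y1) * (B1 * C3 - C1 * B3) - (y3 - y1) * (B1 * C2 - C1 * B2)).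
Proof. rewrite /D3; ring. Qed.


Lemma core_bound (y1 y2 y3 l B1 B2 B3 Q1 Q2 Q3 : R) :
  0 < y1 -> y1 < y2 -> y2 < y3 -> 0 <= l ->
  0 < B1 -> 0 < B2 -> B2 <= B3 -> Q1 <= Q2 -> Q2 <= Q3 ->
  (y3 - y1) * (Q2 - Q1) <= (y2 - y1) * (Q3 - Q1) ->
  0 <= (y3 + l) * ((y2 - y1) * (B1 * (B3 * Q3) - (B1 * Q1) * B3)
        - (y3 - y1) * (B1 * (B2 * Q2) - (B1 * Q1) * B2)).
Proof.
move=> p1 p12 p23 l0 b1 b2 b23 q12 q23 cv.
have -> : (y2 - y1) * (B1 * (B3 * Q3) - (B1 * Q1) * B3)
        - (y3 - y1) * (B1 * (B2 * Q2) - (B1 * Q1) * B2)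
   = B1 * ((y2 - y1) * (B3 - B2) * (Q3 - Q1)
       + B2 * ((y2 - y1) * (Q3 - Q1) - (y3 - y1) * (Q2 - Q1))) by ring.
apply: mulr_ge0; first lra.
apply: mulr_ge0; first lra.
apply: addr_ge0.
  apply: mulr_ge0; [apply: mulr_ge0|]; lra.
apply: mulr_ge0; lra.
Qed.

Lemma D3_ge0 k a b c y1 y2 y3 : (b - a = k)%N -> (a <= b)%N -> (b <= c)%N ->
  0 < y1 -> y1 < y2 -> y2 < y3 ->
  0 <= D3 y1 y2 y3 (Nr a b y1) (Nr a b y2) (Nr a b y3) (Nr a c y1) (Nr a c y2) (Nr a c y3).
Proof.
elim: k a => [|k IH] a hk ab bc p1 p12 p23.
  have -> : b = a by lia.
  rewrite !Nr_nil /D3; lra.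
have ab' : (a < b)%N by lia.
have ac : (a < c)%N by lia.
rewrite !(Nr_recl _ _ _ ab') !(Nr_recl _ _ _ ac) step_id.
have h1 := IH a.+1 ltac:(lia) ltac:(lia) bc p1 p12 p23.
have ab1 : (a.+1 <= b)%N by lia.
rewrite !(Nr_split _ _ _ _ ab1 bc).
have l0 := r0 a.
set l := r a in l0 *.
have q12 : Nr b c y1 <= Nr b c y2 by apply: (@Nr_mono (c - b)) => //; lra.
have q23 : Nr b c y2 <= Nr b c y3 by apply: (@Nr_mono (c - b)) => //; lra.
have b1 : 0 < Nr a.+1 b y1 by apply: Nr_pos.
have b2 : 0 < Nr a.+1 b y2 by apply: Nr_pos; lra.
have b23 : Nr a.+1 b y2 <= Nr a.+1 b y3 by apply: (@Nr_mono (b - a.+1)) => //; lra.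
have cv := @Nr_convex (c - b) b c y1 y2 y3 erefl p1 p12 p23.
have T3 := @core_bound y1 y2 y3 l _ _ _ _ _ _ p1 p12 p23 l0 b1 b2 b23 q12 q23 cv.
have T1 : 0 <= (y2 + l) * (y3 + l) * D3 y1 y2 y3 (Nr a.+1 b y1) (Nr a.+1 b y2) (Nr a.+1 b y3)
           (Nr a.+1 b y1 * Nr b c y1) (Nr a.+1 b y2 * Nr b c y2) (Nr a.+1 b y3 * Nr b c y3).
  rewrite -!(Nr_split _ _ _ _ ab1 bc); apply: mulr_ge0 => //; apply: mulr_ge0; lra.
have T2 : 0 <= (y3 - y1) * (y3 - y2) * (Nr a.+1 b y1 * (Nr a.+1 b y2 * Nr b c y2)
    - Nr a.+1 b y1 * Nr b c y1 * Nr a.+1 b y2).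
  have -> : Nr a.+1 b y1 * (Nr a.+1 b y2 * Nr b c y2) - Nr a.+1 b y1 * Nr b c y1 * Nr a.+1 b y2
     = Nr a.+1 b y1 * Nr a.+1 b y2 * (Nr b c y2 - Nr b c y1) by ring.
  apply: mulr_ge0; [apply: mulr_ge0|apply: mulr_ge0; [apply: mulr_ge0|]]; lra.
lra.
Qed.


Lemma D3_gt0 a b c y1 y2 y3 : (a < b)%N -> (b < c)%N ->
  0 < y1 -> y1 < y2 -> y2 < y3 ->
  0 < D3 y1 y2 y3 (Nr a b y1) (Nr a b y2) (Nr a b y3) (Nr a c y1) (Nr a c y2) (Nr a c y3).
Proof.
move=> ab' bc' p1 p12 p23.
have bc : (b <= c)%N by lia.
have ac : (a < c)%N by lia.
rewrite !(Nr_recl _ _ _ ab') !(Nr_recl _ _ _ ac) step_id.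
have h1 := @D3_ge0 (b - a.+1) a.+1 b c y1 y2 y3 erefl ltac:(lia) bc p1 p12 p23.
have ab1 : (a.+1 <= b)%N by lia.
rewrite !(Nr_split _ _ _ _ ab1 bc).
have l0 := r0 a.
set l := r a in l0 *.
have q12 : Nr b c y1 < Nr b c y2 by apply: (@Nr_smono (c - b).-1) => //; lia.
have q23 : Nr b c y2 <= Nr b c y3 by apply: (@Nr_mono (c - b)) => //; lra.
have b1 : 0 < Nr a.+1 b y1 by apply: Nr_pos.
have b2 : 0 < Nr a.+1 b y2 by apply: Nr_pos; lra.
have b23 : Nr a.+1 b y2 <= Nr a.+1 b y3 by apply: (@Nr_mono (b - a.+1)) => //; lra.
have cv := @Nr_convex (c - b) b c y1 y2 y3 erefl p1 p12 p23.
have T3 := @core_bound y1 y2 y3 l _ _ _ _ _ _ p1 p12 p23 l0 b1 b2 b23 (ltW q12) q23 cv.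
have T1 : 0 <= (y2 + l) * (y3 + l) * D3 y1 y2 y3 (Nr a.+1 b y1) (Nr a.+1 b y2) (Nr a.+1 b y3)
           (Nr a.+1 b y1 * Nr b c y1) (Nr a.+1 b y2 * Nr b c y2) (Nr a.+1 b y3 * Nr b c y3).
  rewrite -!(Nr_split _ _ _ _ ab1 bc); apply: mulr_ge0 => //; apply: mulr_ge0; lra.
have T2 : 0 < (y3 - y1) * (y3 - y2) * (Nr a.+1 b y1 * (Nr a.+1 b y2 * Nr b c y2)
    - Nr a.+1 b y1 * Nr b c y1 * Nr a.+1 b y2).
  have -> : Nr a.+1 b y1 * (Nr a.+1 b y2 * Nr b c y2) - Nr a.+1 b y1 * Nr b c y1 * Nr a.+1 b y2
     = Nr a.+1 b y1 * Nr a.+1 b y2 * (Nr b c y2 - Nr b c y1) by ring.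
  apply: mulr_gt0; [apply: mulr_gt0|apply: mulr_gt0; [apply: mulr_gt0|]]; lra.
lra.
Qed.

End Alg.
Arguments Nr {R}.
Arguments D3 {R}.

Lemma det2 (R : comNzRingType) (A : 'M[R]_2) : \det A = A 0 0 * A 1 1 - A 0 1 * A 1 0.
Proof.
rewrite (expand_det_row _ 0) !big_ord_recl big_ord0 /cofactor !det_mx11 !mxE /=.
rewrite (_ : lift _ _ = 1 :> 'I_2); last by apply/val_inj.
rewrite (_ : lift _ _ = 0 :> 'I_2); last by apply/val_inj.
rewrite (_ : ord0 = 0 :> 'I_2); last by apply/val_inj.
rewrite /bump /= expr0 expr1; ring.
Qed.

Lemma det3 (R : comNzRingType) (A : 'M[R]_3) : \det A =
  A 0 0 * (A 1 1 * A 2 2 - A 1 2 * A 2 1) - A 0 1 * (A 1 0 * A 2 2 - A 1 2 * A 2 0)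
  + A 0 2 * (A 1 0 * A 2 1 - A 1 1 * A 2 0).
Proof.
rewrite (expand_det_row _ 0) !big_ord_recl big_ord0 /cofactor !det2 !mxE /=.
do ![rewrite (_ : lift _ _ = 0 :> 'I_3); last by apply/val_inj
    |rewrite (_ : lift _ _ = 1 :> 'I_3); last by apply/val_inj
    |rewrite (_ : lift _ _ = 2 :> 'I_3); last by apply/val_inj].
rewrite (_ : ord0 = 0 :> 'I_3); last by apply/val_inj.
rewrite /bump /= expr0 expr1; ring.
Qed.

Definition rq (R : realType) (q : R) (j : nat) : R := (q ^+ j)^-1 - 1.
Definition cq (R : realType) (q : R) (n : nat) : R := \prod_(j < n) q ^+ j.
Arguments rq {R}.
Arguments cq {R}.

Lemma rq_ge0 (R : realType) (q : R) : 0 < q -> q < 1 -> forall j, 0 <= rq q j.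
Proof.
move=> h0 h1 j; rewrite /rq subr_ge0 invf_ge1 ?exprn_gt0 //.
by apply: exprn_ile1; lra.
Qed.

Lemma cq_gt0 (R : realType) (q : R) n : 0 < q -> 0 < cq q n.
Proof. by move=> h0; rewrite /cq; apply: prodr_gt0 => j _; apply: exprn_gt0. Qed.

Lemma kern_eq (R : realType) (q : R) mu n : 0 < q ->
  qkernel q mu n = cq q n * Nr (rq q) 0 n (1 - q `^ mu).
Proof.
move=> h0; rewrite /qkernel /qpoch /Nr /cq big_mkord -big_split /=.
apply: eq_bigr => j _; rewrite /rq.
have hj : q ^+ j != 0 by apply: expf_neq0; rewrite gt_eqF.
field.
done.
Qed.

Lemma y_pos (R : realType) (q mu : R) : 0 < q -> q < 1 -> 0 < mu -> 0 < 1 - q `^ mu.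
Proof.
move=> h0 h1 hm.
have lq : ln q < 0 by apply: ln_lt0; rewrite h0 h1.
rewrite /powR gt_eqF // subr_gt0 expR_lt1.
nra.
Qed.

Lemma y_lt (R : realType) (q mu1 mu2 : R) : 0 < q -> q < 1 -> mu1 < mu2 ->
  1 - q `^ mu1 < 1 - q `^ mu2.
Proof.
move=> h0 h1 hm.
have lq : ln q < 0 by apply: ln_lt0; rewrite h0 h1.
rewrite /powR gt_eqF //.
have : expR (mu2 * ln q) < expR (mu1 * ln q) by rewrite ltr_expR; nra.
lra.
Qed.

Theorem lemma3 (R : realType) (q : R) (hq0 : 0 < q) (hq1 : q < 1)
  (m : nat) (hm1 : (1 <= m)%N) (hm3 : (m <= 3)%N)
  (mu : 'I_m -> R) (n : 'I_m -> nat)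
  (hmu0 : forall i, 0 < mu i)
  (hmu : forall i j : 'I_m, (i < j)%N -> mu i < mu j)
  (hn : forall i j : 'I_m, (i < j)%N -> (n i < n j)%N) :
  0 < \det (\matrix_(i < m, j < m) qkernel q (mu i) (n j)).
Proof.
have r0 := @rq_ge0 _ q hq0 hq1.
case: m hm1 hm3 mu n hmu0 hmu hn => [|[|[|[|m]]]] //= _ _ mu n hmu0 hmu hn.
- rewrite det_mx11 mxE kern_eq //; apply: mulr_gt0; first exact: cq_gt0.
  apply: Nr_pos => //; exact: y_pos.
- rewrite det2 !mxE !kern_eq //.
  have h01 : (n 0%R < n 1%R)%N by apply: hn.
  rewrite !(Nr_split _ _ _ _ _ _ (leq0n (n 0%R)) (ltnW h01)).
  set y0 := 1 - q `^ mu 0%R; set y1 := 1 - q `^ mu 1%R.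
  have p0 : 0 < y0 by apply: y_pos.
  have p01 : y0 < y1 by apply: y_lt => //; apply: hmu.
  have Q : Nr (rq q) (n 0%R) (n 1%R) y0 < Nr (rq q) (n 0%R) (n 1%R) y1.
    by apply: (@Nr_smono _ _ r0 (n 1%R - n 0%R).-1) => //; lia.
  have P0 := @Nr_pos _ _ r0 0 (n 0%R) y0 p0.
  have P1 := @Nr_pos _ _ r0 0 (n 0%R) y1 ltac:(lra).
  have C0 := @cq_gt0 _ q (n 0%R) hq0.
  have C1 := @cq_gt0 _ q (n 1%R) hq0.
  have H : 0 < cq q (n 0%R) * cq q (n 1%R) * (Nr (rq q) 0 (n 0%R) y0 * Nr (rq q) 0 (n 0%R) y1)
      * (Nr (rq q) (n 0%R) (n 1%R) y1 - Nr (rq q) (n 0%R) (n 1%R) y0).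
    by apply: mulr_gt0; [apply: mulr_gt0; apply: mulr_gt0|]; lra.
  apply: (lt_le_trans H); rewrite le_eqVlt; apply/orP; left; apply/eqP; ring.
- rewrite det3 !mxE !kern_eq //.
  have h01 : (n 0%R < n 1%R)%N by apply: hn.
  have h12 : (n 1%R < n 2%R)%N by apply: hn.
  have h02 : (n 0%R <= n 2%R)%N by lia.
  rewrite !(Nr_split _ _ _ _ _ _ (leq0n (n 0%R)) (ltnW h01)).
  rewrite !(Nr_split _ _ _ _ _ _ (leq0n (n 0%R)) h02).
  set y0 := 1 - q `^ mu 0%R; set y1 := 1 - q `^ mu 1%R; set y2 := 1 - q `^ mu 2%R.
  have p0 : 0 < y0 by apply: y_pos.
  have p01 : y0 < y1 by apply: y_lt => //; apply: hmu.
  have p12 : y1 < y2 by apply: y_lt => //; apply: hmu.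
  have D := @D3_gt0 _ _ r0 (n 0%R) (n 1%R) (n 2%R) y0 y1 y2 h01 h12 p0 p01 p12.
  have P0 := @Nr_pos _ _ r0 0 (n 0%R) y0 p0.
  have P1 := @Nr_pos _ _ r0 0 (n 0%R) y1 ltac:(lra).
  have P2 := @Nr_pos _ _ r0 0 (n 0%R) y2 ltac:(lra).
  have C0 := @cq_gt0 _ q (n 0%R) hq0.
  have C1 := @cq_gt0 _ q (n 1%R) hq0.
  have C2 := @cq_gt0 _ q (n 2%R) hq0.
  have H : 0 < (cq q (n 0%R) * cq q (n 1%R) * cq q (n 2%R)) *
     (Nr (rq q) 0 (n 0%R) y0 * Nr (rq q) 0 (n 0%R) y1 * Nr (rq q) 0 (n 0%R) y2) *
     D3 y0 y1 y2 (Nr (rq q) (n 0%R) (n 1%R) y0) (Nr (rq q) (n 0%R) (n 1%R) y1) (Nr (rq q) (n 0%R) (n 1%R) y2)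
        (Nr (rq q) (n 0%R) (n 2%R) y0) (Nr (rq q) (n 0%R) (n 2%R) y1) (Nr (rq q) (n 0%R) (n 2%R) y2).
    by do ![apply: mulr_gt0].
  apply: (lt_le_trans H); rewrite le_eqVlt; apply/orP; left; apply/eqP; rewrite /D3; ring.
Qed.
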